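(* Let $\mathbb G=V_1\times V_2$ be a step-two Carnot group of rank $r$, let $n\geq r$ be an integer and $\pi:\mathbb F_n\to\mathbb G$ a surjective Carnot morphism. Then the real vector spaces $\mathcal A(V_1\times V_2)$ and $\oplus_{k=n-2}^n\Lambda^k(\pi)$ are isomorphic.
   Context: A step-two Carnot group is $\mathbb G=V_1\times V_2$ ($V_1,V_2$ finite-dimensional real vector spaces, $V_2\ne\{0\}$) with a bilinear skew-symmetric $[\cdot,\cdot]:V_1\times V_1\to V_2$ whose image spans $V_2$, and group law $(x,z)\cdot(x',z')=(x+x',z+z'+[x,x'])$; its rank is $\dim V_1$. $\mathcal A(V_1\times V_2)$ is the space of real-valued maps affine in the usual sense on the vector space $V_1\times V_2$. $\mathbb F_n=\Lambda^1(\mathbb R^n)\times\Lambda^2(\mathbb R^n)$ with bracket $[\theta,\theta']=\theta\wedge\theta'$. A Carnot morphism $\pi:\mathbb G\to\mathbb G'$ is $\pi(x,z)=(\pi_1(x),\pi_2(z))$ with $\pi_1,\pi_2$ linear and $\pi_2([x,y])=[\pi_1(x),\pi_1(y)]'$. For $\eta\in\Lambda^k(\mathbb R^n)$, $\operatorname{Anh}^{1,2}_\wedge\eta:=\{(\theta,\omega)\in\mathbb F_n:\theta\wedge\eta=0,\ \omega\wedge\eta=0\}$ and $\Lambda^k(\pi):=\{\eta\in\Lambda^k(\mathbb R^n):\ker\pi\subset\operatorname{Anh}^{1,2}_\wedge\eta\}$. *)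

(* Defs.v *)
From HB Require Import structures.
From mathcomp Require Import all_boot all_order all_algebra.
From mathcomp Require Import reals.
Set Implicit Arguments. Unset Strict Implicit. Unset Printing Implicit Defensive.
Import Order.TTheory GRing.Theory Num.Theory.
Local Open Scope ring_scope.

(* The exterior algebra Lambda(R^n): an element eta is the family of its
   coordinates eta(S) on the basis e_S = e_{s1} /\ ... /\ e_{sk}
   (s1 < ... < sk), S ranging over subsets of {0,...,n-1}. *)
Notation ext R n := {ffun {set 'I_n} -> R^o}.

(* sign exponent: e_A /\ e_B = (-1)^(wsign A B) e_(A u B) for disjoint A,B *)
Definition wsign (n : nat) (A B : {set 'I_n}) : nat :=
  #|[set p in setX A B | (p.2 < p.1)%N]|.

Definition wedge (R : fieldType) (n : nat) (a b : ext R n) : ext R n :=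
  [ffun S : {set 'I_n} => \sum_(A : {set 'I_n} | A \subset S)
      (-1) ^+ wsign A (S :\: A) * a A * b (S :\: A)].

Definition homog (R : fieldType) (n k : nat) (eta : ext R n) : Prop :=
  forall S : {set 'I_n}, #|S| != k -> eta S = 0.

(* Lambda^k(pi) for a Carnot morphism pi = (pi1, pi2) : F_n -> G, where pi1
   is (the restriction to Lambda^1 of) p1 and pi2 that of p2 to Lambda^2;
   ker pi = {(theta, omega) : pi1 theta = 0, pi2 omega = 0}. *)
Definition Lambda_pi (R : fieldType) (V1 V2 : vectType R) (n k : nat)
    (p1 : ext R n -> V1) (p2 : ext R n -> V2) (eta : ext R n) : Prop :=
  homog k eta /\
  (forall theta omega : ext R n, homog 1 theta -> homog 2 omega ->
      p1 theta = 0 -> p2 omega = 0 ->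
      wedge theta eta = 0 /\ wedge omega eta = 0).

Definition affine_map (R : fieldType) (V1 V2 : vectType R) (f : V1 * V2 -> R) : Prop :=
  exists l : V1 * V2 -> R,
    (forall (a : R) (p q : V1 * V2), l (a *: p + q) = a * l p + l q) /\
    exists c : R, forall p, f p = l p + c.

Definition step_two_bracket (R : fieldType) (V1 V2 : vectType R) (br : V1 -> V1 -> V2) : Prop :=
  [/\ forall (a : R) (x y z : V1), br (a *: x + y) z = a *: br x z + br y z,
      forall (a : R) (x y z : V1), br z (a *: x + y) = a *: br z x + br z y,
      forall x y : V1, br x y = - br y x,
      (forall W : {vspace V2}, (forall x y : V1, br x y \in W) -> W = fullv) &
      exists z : V2, z != 0].

(* pi = (p1, p2) restricted to F_n = Lambda^1 x Lambda^2 is a surjective Carnot morphism *)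
Definition surj_carnot_morphism (R : fieldType) (V1 V2 : vectType R) (br : V1 -> V1 -> V2)
    (n : nat) (p1 : ext R n -> V1) (p2 : ext R n -> V2) : Prop :=
  [/\ forall (a : R) (x y : ext R n), homog 1 x -> homog 1 y ->
        p1 (a *: x + y) = a *: p1 x + p1 y,
      forall (a : R) (x y : ext R n), homog 2 x -> homog 2 y ->
        p2 (a *: x + y) = a *: p2 x + p2 y,
      forall x y : ext R n, homog 1 x -> homog 1 y ->
        p2 (wedge x y) = br (p1 x) (p1 y),
      forall v : V1, exists x, homog 1 x /\ p1 x = v &
      forall w : V2, exists y, homog 2 y /\ p2 y = w].

Definition in_sum_Lambda_pi (R : fieldType) (V1 V2 : vectType R) (n : nat)
    (p1 : ext R n -> V1) (p2 : ext R n -> V2) (eta : ext R n) : Prop :=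
  exists e0 e1 e2 : ext R n,
    [/\ Lambda_pi (n - 2) p1 p2 e0, Lambda_pi (n - 1) p1 p2 e1,
        Lambda_pi n p1 p2 e2 & eta = e0 + e1 + e2].

(* Main.v *)
Require Import Defs.
From HB Require Import structures.
From mathcomp Require Import all_boot all_order all_algebra.
From mathcomp Require Import reals ring zify.
From Stdlib Require Import ClassicalEpsilon.
Set Implicit Arguments. Unset Strict Implicit. Unset Printing Implicit Defensive.
Import Order.TTheory GRing.Theory Num.Theory.
Local Open Scope ring_scope.

Section W.
Variables (R : fieldType) (n : nat).
Implicit Types (x y u : ext R n).

Lemma extE a x y (S : {set 'I_n}) : (a *: x + y) S = a * x S + y S.
Proof. by rewrite !ffunE. Qed.


Lemma wedgeDr u a x y : wedge u (a *: x + y) = a *: wedge u x + wedge u y.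
Proof.
apply/ffunP=> S; rewrite extE !ffunE big_distrr -big_split /=.
by apply: eq_bigr => A _; rewrite extE; ring.
Qed.

Lemma wedgeDl u a x y : wedge (a *: x + y) u = a *: wedge x u + wedge y u.
Proof.
apply/ffunP=> S; rewrite extE !ffunE big_distrr -big_split /=.
by apply: eq_bigr => A _; rewrite extE; ring.
Qed.

Lemma wedgeAr u x y : wedge u (x + y) = wedge u x + wedge u y.
Proof. by rewrite -[x]scale1r wedgeDr !scale1r. Qed.

Lemma wedgeAl u x y : wedge (x + y) u = wedge x u + wedge y u.
Proof. by rewrite -[x]scale1r wedgeDl !scale1r. Qed.
Lemma addE x y (S : {set 'I_n}) : (x + y) S = x S + y S.
Proof. by rewrite ffunE. Qed.

Lemma zeroE (S : {set 'I_n}) : (0 : ext R n) S = 0.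
Proof. by rewrite ffunE. Qed.

Definition sg (A B : {set 'I_n}) : R := (-1) ^+ wsign A B.
Definition delta (A : {set 'I_n}) : ext R n := [ffun S => (S == A)%:R].

Lemma sg_sq A B : sg A B * sg A B = 1.
Proof. by rewrite /sg -exprMn mulrNN mulr1 expr1n. Qed.

Lemma homog0 k : homog k (0 : ext R n).
Proof. by move=> S _; rewrite ffunE. Qed.

Lemma homogD k a x y : homog k x -> homog k y -> homog k (a *: x + y).
Proof. by move=> hx hy S hS; rewrite extE hx // hy // mulr0 addr0. Qed.

Lemma homog_delta (A : {set 'I_n}) : homog #|A| (delta A).
Proof. by move=> S hS; rewrite ffunE; case: (eqVneq S A) hS => [->|]; rewrite ?eqxx. Qed.

Lemma card_sub_split (A S : {set 'I_n}) : A \subset S -> #|S| = (#|A| + #|S :\: A|)%N.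
Proof. by move=> sAS; rewrite -(cardsID A S) (setIidPr sAS). Qed.

Lemma wedge_homog j k x y : homog j x -> homog k y -> homog (j + k) (wedge x y).
Proof.
move=> hx hy S hS; rewrite ffunE big1 // => A sAS.
have := card_sub_split sAS => e.
case: (eqVneq #|A| j) => hA; last by rewrite hx ?mulr0 ?mul0r.
rewrite hy ?mulr0 //; apply/eqP => hk; move: hS; rewrite e hA hk eqxx //.
Qed.

Lemma homog_big k x : (n < k)%N -> homog k x -> x = 0.
Proof.
move=> hk hx; apply/ffunP => S; rewrite ffunE hx //.
have := max_card (mem S); rewrite card_ord => h.
by apply/eqP => e; move: h; rewrite e leqNgt hk.
Qed.

Lemma card_n (S : {set 'I_n}) : #|S| = n -> S = setT.
Proof.
move=> h; have := cardsC S; rewrite h card_ord => e.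
have : #|~: S| = 0%N by lia.
by move/cards0_eq => /(congr1 (@setC _)); rewrite setCK setC0.
Qed.

Lemma homog_top x : homog n x -> x setT = 0 -> x = 0.
Proof.
move=> hx h0; apply/ffunP => S; rewrite ffunE.
case: (eqVneq #|S| n) => hS; last by rewrite hx.
by rewrite (card_n hS).
Qed.

Lemma wedge_delta A0 y S : wedge (delta A0) y S =
  if A0 \subset S then sg A0 (S :\: A0) * y (S :\: A0) else 0.
Proof.
rewrite ffunE; case: ifP => h.
  rewrite (bigD1 A0) //= big1 ?addr0; first by rewrite ffunE eqxx mulr1.
  by move=> A /andP [_ hA]; rewrite ffunE (negbTE hA) mulr0 mul0r.
by rewrite big1 // => A hA; rewrite ffunE; case: eqP => [e|]; [move: h; rewrite -e hA | rewrite mulr0 mul0r].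
Qed.

Implicit Types (A B C : {set 'I_n}).
Lemma disjP' A B : [disjoint A & B] -> forall i, i \in A -> i \in B -> False.
Proof. by move=> d i xa xb; move: (disjointFr d xa); rewrite xb. Qed.

Lemma wsignUl A1 A2 B : [disjoint A1 & A2] ->
  wsign (A1 :|: A2) B = (wsign A1 B + wsign A2 B)%N.
Proof.
move=> /disjP' d; rewrite /wsign -[RHS]subn0.
set s1 := [set p in setX A1 B | _]; set s2 := [set p in setX A2 B | _].
have -> : [set p in setX (A1 :|: A2) B | (p.2 < p.1)%N] = s1 :|: s2.
  by apply/setP => p; rewrite !inE !andb_orl.
rewrite cardsU; congr (_ - _)%N; apply/eqP; rewrite cards_eq0; apply/eqP/setP => p.
rewrite !inE; apply/negP => /andP [/andP [/andP [h1 _] _] /andP [/andP [h2 _] _]].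
exact: d h1 h2.
Qed.

Lemma wsignUr A B1 B2 : [disjoint B1 & B2] ->
  wsign A (B1 :|: B2) = (wsign A B1 + wsign A B2)%N.
Proof.
move=> /disjP' d; rewrite /wsign -[RHS]subn0.
set s1 := [set p in setX A B1 | _]; set s2 := [set p in setX A B2 | _].
have -> : [set p in setX A (B1 :|: B2) | (p.2 < p.1)%N] = s1 :|: s2.
  by apply/setP => p; rewrite !inE andb_orr !andb_orl.
rewrite cardsU; congr (_ - _)%N; apply/eqP; rewrite cards_eq0; apply/eqP/setP => p.
rewrite !inE; apply/negP => /andP [/andP [/andP [_ h1] _] /andP [/andP [_ h2] _]].
exact: d h1 h2.
Qed.

Lemma decomp k x : homog k x -> x = \sum_(A : {set 'I_n} | #|A| == k) x A *: delta A.
Proof.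
move=> hx; apply/ffunP => S; rewrite sum_ffunE.
case: (eqVneq #|S| k) => hS.
  rewrite (bigD1 S) /=; last by rewrite hS.
  rewrite big1 ?addr0; first by rewrite !ffunE eqxx; exact: (esym (mulr1 _)).
  move=> A /andP [_ hA]; rewrite !ffunE eq_sym (negbTE hA); exact: (mulr0 _).
rewrite hx // big1 // => A /eqP hA; rewrite !ffunE; case: (eqVneq S A) => [e|_]; last by rewrite mulr0n scaler0.
by move: hS; rewrite e hA eqxx.
Qed.

Lemma lin_sum k (g : ext R n -> R) :
  (forall a x y, homog k x -> homog k y -> g (a *: x + y) = a * g x + g y) ->
  forall x, homog k x -> g x = \sum_(A : {set 'I_n} | #|A| == k) x A * g (delta A).
Proof.
move=> gl x hx.
have g0 : g 0 = 0.
  have := gl 1 0 0 (@homog0 k) (@homog0 k); rewrite scale1r addr0 mul1r => /eqP.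
  by rewrite -subr_eq0 opprD addrA subrr sub0r oppr_eq0 => /eqP.
rewrite {1}(decomp hx).
pose K := fun (u : ext R n) (v : R) => homog k u /\ g u = v.
suff : K (\sum_(A : {set 'I_n} | #|A| == k) x A *: delta A) (\sum_(A : {set 'I_n} | #|A| == k) x A * g (delta A)) by case.
apply: (big_rec2 K); first by split; [exact: homog0|].
move=> A u v /eqP hA [hu <-]; split; first by apply: homogD => //; rewrite -hA; exact: homog_delta.
by rewrite gl // -hA; exact: homog_delta.
Qed.

Definition ek (k : nat) (L : {set 'I_n} -> R) : ext R n :=
  [ffun S : {set 'I_n} => if #|S| == (n - k)%N then sg (~: S) S * L (~: S) else 0].

Lemma ek_homog k L : homog (n - k) (ek k L).
Proof. by move=> S hS; rewrite ffunE (negbTE hS). Qed.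

Lemma wedge_ek_top k L x : (k <= n)%N -> homog k x ->
  wedge x (ek k L) setT = \sum_(A : {set 'I_n} | #|A| == k) x A * L A.
Proof.
move=> kn hx; rewrite ffunE big_mkcond [RHS]big_mkcond /=; apply: eq_bigr => A _.
rewrite subsetT setTD ffunE setCK.
case: (eqVneq #|A| k) => hA.
  have hC := cardsC A; rewrite card_ord in hC.
  have -> : #|~: A| == (n - k)%N by apply/eqP; lia.
  have h := sg_sq A (~: A); rewrite /sg in h *.
  by transitivity (x A * L A * ((-1) ^+ wsign A (~: A) * (-1) ^+ wsign A (~: A))); [ring | rewrite h mulr1].
by rewrite hx // mulr0 mul0r.
Qed.

Lemma disj_of A B : (forall i, i \in A -> i \in B -> False) -> [disjoint A & B].
Proof.
move=> h; apply/pred0P => i /=; apply/negP => /andP [ha hb]; exact: h ha hb.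
Qed.

Lemma sign_id (k : 'I_n) B : k \in B ->
  sg (B :\ k) (~: B) * sg B (~: B) = sg [set k] (~: [set k]) * sg [set k] (B :\ k).
Proof.
move=> kB.
have e1 : B = [set k] :|: (B :\ k) by rewrite setD1K.
have d1 : [disjoint [set k] & B :\ k].
  by apply: disj_of => i; rewrite !inE => /eqP -> /andP [] /eqP.
have e2 : ~: [set k] = ~: B :|: (B :\ k).
  apply/setP => i; rewrite !inE; case: (eqVneq i k) => [->|] /=; first by rewrite kB.
  by case: (i \in B).
have d2 : [disjoint ~: B & B :\ k].
  by apply: disj_of => i; rewrite !inE => /negbTE -> /andP [].
rewrite /sg.
have -> : wsign B (~: B) = (wsign [set k] (~: B) + wsign (B :\ k) (~: B))%N.
  by rewrite {1}e1 (wsignUl _ d1).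
have -> : wsign [set k] (~: [set k]) = (wsign [set k] (~: B) + wsign [set k] (B :\ k))%N.
  by rewrite e2 (wsignUr _ d2).
rewrite /sg !exprD.
set a := (-1) ^+ wsign (B :\ k) (~: B); set b := (-1) ^+ wsign [set k] (~: B).
set c := (-1) ^+ wsign [set k] (B :\ k).
have ha : a * a = 1 by rewrite /a -exprMn mulrNN mulr1 expr1n.
have hc : c * c = 1 by rewrite /c -exprMn mulrNN mulr1 expr1n.
by rewrite mulrCA ha -mulrA hc.
Qed.
End W.
Arguments delta {R n} A.
Arguments sg {R n} A B.

Section Main.
Variables (R : fieldType) (V1 V2 : vectType R) (br : V1 -> V1 -> V2) (n : nat).
Variables (p1 : ext R n -> V1) (p2 : ext R n -> V2).
Hypothesis lin1 : forall (a : R) (x y : ext R n), homog 1 x -> homog 1 y ->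
        p1 (a *: x + y) = a *: p1 x + p1 y.
Hypothesis lin2 : forall (a : R) (x y : ext R n), homog 2 x -> homog 2 y ->
        p2 (a *: x + y) = a *: p2 x + p2 y.
Hypothesis hbr : forall x y : ext R n, homog 1 x -> homog 1 y ->
        p2 (wedge x y) = br (p1 x) (p1 y).
Variables (s1 : V1 -> ext R n) (s2 : V2 -> ext R n).
Hypothesis hs1 : forall v, homog 1 (s1 v) /\ p1 (s1 v) = v.
Hypothesis hs2 : forall v, homog 2 (s2 v) /\ p2 (s2 v) = v.

Lemma p1_0 : p1 0 = 0.
Proof.
have := lin1 1 (@homog0 R n 1) (@homog0 R n 1).
rewrite scale1r addr0 scale1r => /eqP; rewrite -subr_eq0 opprD addrA subrr sub0r oppr_eq0 => /eqP //.
Qed.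

Lemma p2_0 : p2 0 = 0.
Proof.
have := lin2 1 (@homog0 R n 2) (@homog0 R n 2).
rewrite scale1r addr0 scale1r => /eqP; rewrite -subr_eq0 opprD addrA subrr sub0r oppr_eq0 => /eqP //.
Qed.

Lemma LambdaD k a x y : Lambda_pi k p1 p2 x -> Lambda_pi k p1 p2 y ->
  Lambda_pi k p1 p2 (a *: x + y).
Proof.
move=> [hx kx] [hy ky]; split; first exact: homogD.
move=> th om h1 h2 e1 e2; have [a1 a2] := kx th om h1 h2 e1 e2.
have [b1 b2] := ky th om h1 h2 e1 e2.
by rewrite !wedgeDr a1 a2 b1 b2 scaler0 addr0.
Qed.

Lemma insumD a x y : in_sum_Lambda_pi p1 p2 x -> in_sum_Lambda_pi p1 p2 y ->
  in_sum_Lambda_pi p1 p2 (a *: x + y).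
Proof.
move=> [e0 [e1 [e2 [h0 h1 h2 ->]]]] [f0 [f1 [f2 [g0 g1 g2 ->]]]].
exists (a *: e0 + f0), (a *: e1 + f1), (a *: e2 + f2); split; try exact: LambdaD.
by apply/ffunP => S; rewrite !ffunE /=; ring.
Qed.

Lemma ker1 x th : in_sum_Lambda_pi p1 p2 x -> homog 1 th -> p1 th = 0 -> wedge th x = 0.
Proof.
move=> [e0 [e1 [e2 [h0 h1 h2 ->]]]] ht pt.
have k := fun e (h : Lambda_pi _ p1 p2 e) => (h.2 th 0 ht (@homog0 R n 2) pt p2_0).1.
by rewrite !wedgeAr (k _ _ h0) (k _ _ h1) (k _ _ h2) !addr0.
Qed.

Lemma ker2 x om : in_sum_Lambda_pi p1 p2 x -> homog 2 om -> p2 om = 0 -> wedge om x = 0.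
Proof.
move=> [e0 [e1 [e2 [h0 h1 h2 ->]]]] ht pt.
have k := fun e (h : Lambda_pi _ p1 p2 e) => (h.2 0 om (@homog0 R n 1) ht p1_0 pt).2.
by rewrite !wedgeAr (k _ _ h0) (k _ _ h1) (k _ _ h2) !addr0.
Qed.

Lemma indep1 x th th' : in_sum_Lambda_pi p1 p2 x -> homog 1 th -> homog 1 th' ->
  p1 th = p1 th' -> wedge th x = wedge th' x.
Proof.
move=> hx ht ht' e.
have hd : homog 1 ((-1) *: th' + th) by apply: homogD.
have pd : p1 ((-1) *: th' + th) = 0 by rewrite lin1 // e scaleN1r addNr.
have -> : th = 1 *: ((-1) *: th' + th) + th' by rewrite scale1r scaleN1r addrAC addNr add0r.
by rewrite wedgeDl ker1 // scaler0 add0r.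
Qed.

Lemma indep2 x th th' : in_sum_Lambda_pi p1 p2 x -> homog 2 th -> homog 2 th' ->
  p2 th = p2 th' -> wedge th x = wedge th' x.
Proof.
move=> hx ht ht' e.
have hd : homog 2 ((-1) *: th' + th) by apply: homogD.
have pd : p2 ((-1) *: th' + th) = 0 by rewrite lin2 // e scaleN1r addNr.
have -> : th = 1 *: ((-1) *: th' + th) + th' by rewrite scale1r scaleN1r addrAC addNr add0r.
by rewrite wedgeDl ker2 // scaler0 add0r.
Qed.

Definition Phi (x : ext R n) (p : V1 * V2) : R :=
  wedge (s1 p.1) x setT + wedge (s2 p.2) x setT + x setT.

Lemma Phi_lin a x y p : Phi (a *: x + y) p = a * Phi x p + Phi y p.
Proof. by rewrite /Phi !wedgeDr !extE; ring. Qed.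

Lemma Phi_affine x : in_sum_Lambda_pi p1 p2 x -> affine_map (Phi x).
Proof.
move=> hx; exists (fun p => wedge (s1 p.1) x setT + wedge (s2 p.2) x setT); split; last first.
  by exists (x setT).
move=> a p q /=.
have [h1p e1p] := hs1 p.1; have [h1q e1q] := hs1 q.1; have [h1 e1] := hs1 (a *: p.1 + q.1).
have [h2p e2p] := hs2 p.2; have [h2q e2q] := hs2 q.2; have [h2 e2] := hs2 (a *: p.2 + q.2).
have E1 : wedge (s1 (a *: p.1 + q.1)) x = wedge (a *: s1 p.1 + s1 q.1) x.
  by apply: indep1 => //; [apply: homogD | rewrite lin1 // e1 e1p e1q].
have E2 : wedge (s2 (a *: p.2 + q.2)) x = wedge (a *: s2 p.2 + s2 q.2) x.
  by apply: indep2 => //; [apply: homogD | rewrite lin2 // e2 e2p e2q].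
rewrite E1 E2.
by rewrite !wedgeDl !extE; ring.
Qed.

Lemma Phi_inj0 z : in_sum_Lambda_pi p1 p2 z -> (forall p, Phi z p = 0) -> z = 0.
Proof.
move=> hz h0.
have w1 : wedge (s1 0) z = 0 by apply: ker1; [|exact: (hs1 0).1|exact: (hs1 0).2].
have w2 : wedge (s2 0) z = 0 by apply: ker2; [|exact: (hs2 0).1|exact: (hs2 0).2].
have zT : z setT = 0 by have := h0 (0, 0); rewrite /Phi /= w1 w2 !zeroE !add0r.
have t1 : forall th, homog 1 th -> wedge th z setT = 0.
  move=> th ht; have := h0 (p1 th, 0).
  have e : wedge (s1 (p1 th)) z = wedge th z by apply: indep1 => //; [exact: (hs1 _).1 | exact: (hs1 _).2].
  by rewrite /Phi /= w2 zeroE zT !addr0 e.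
have t2 : forall th, homog 2 th -> wedge th z setT = 0.
  move=> th ht; have := h0 (0, p2 th).
  have e : wedge (s2 (p2 th)) z = wedge th z by apply: indep2 => //; [exact: (hs2 _).1 | exact: (hs2 _).2].
  by rewrite /Phi /= w1 zeroE zT add0r addr0 e.
apply/ffunP => S; rewrite [RHS]ffunE.
have hC := cardsC S; rewrite card_ord in hC.
have key : wedge (delta (~: S)) z setT = 0 -> z S = 0.
  rewrite wedge_delta subsetT setTD setCK => /eqP.
  by rewrite mulf_eq0 signr_eq0 /= => /eqP.
case: (eqVneq #|S| n) => hn; first by rewrite (card_n hn).
case: (eqVneq #|S| (n - 1)%N) => hn1.
  have hk : #|~: S| = 1%N by lia.
  by apply: key; apply: t1; rewrite -hk; exact: homog_delta.
case: (eqVneq #|S| (n - 2)%N) => hn2.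
  have hk : #|~: S| = 2%N by lia.
  by apply: key; apply: t2; rewrite -hk; exact: homog_delta.
move: hz => [e0 [e1 [e2 [[g0 _] [g1 _] [g2 _] ->]]]].
by rewrite !ffunE g0 // g1 // g2 // !addr0.
Qed.


Section Surj.
Hypothesis hbr0 : forall x : V1, br x 0 = 0.
Hypothesis hn2 : (2 <= n)%N.
Variables (l : V1 * V2 -> R) (c : R).
Hypothesis llin : forall a p q, l (a *: p + q) = a * l p + l q.

Lemma l00 : l (0, 0) = 0.
Proof.
have := llin 1 0 0; rewrite scale1r addr0 mul1r => /eqP.
by rewrite -subr_eq0 opprD addrA subrr sub0r oppr_eq0 => /eqP.
Qed.

Lemma l1 a (u w : V1) : l (a *: u + w, 0) = a * l (u, 0) + l (w, 0).
Proof.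
rewrite -llin; congr l; apply/eqP; rewrite xpair_eqE /= scaler0 addr0 !eqxx //.
Qed.

Lemma l2 a (u w : V2) : l (0, a *: u + w) = a * l (0, u) + l (0, w).
Proof.
rewrite -llin; congr l; apply/eqP; rewrite xpair_eqE /= scaler0 addr0 !eqxx //.
Qed.

Definition L1 (A : {set 'I_n}) := l (p1 (delta A), 0).
Definition L2 (A : {set 'I_n}) := l (0, p2 (delta A)).
Definition f0 := ek 2 L2.
Definition f1 := ek 1 L1.
Definition f2 : ext R n := [ffun S : {set 'I_n} => if #|S| == n then c else 0].

Lemma top1 th : homog 1 th -> wedge th f1 setT = l (p1 th, 0).
Proof.
move=> ht; rewrite /f1 wedge_ek_top //; last by lia.
symmetry; apply: (lin_sum (g := fun th => l (p1 th, 0))) => // a x y hx hy.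
by rewrite lin1 // l1.
Qed.

Lemma top2 th : homog 2 th -> wedge th f0 setT = l (0, p2 th).
Proof.
move=> ht; rewrite /f0 wedge_ek_top //.
symmetry; apply: (lin_sum (g := fun th => l (0, p2 th))) => // a x y hx hy.
by rewrite lin2 // l2.
Qed.

Lemma homog_eq j k (x : ext R n) : j = k -> homog j x -> homog k x.
Proof. by move=> ->. Qed.

Lemma Lf1 : Lambda_pi (n - 1) p1 p2 f1.
Proof.
split; first exact: ek_homog.
move=> th om ht ho pt po; split.
  have e : (1 + (n - 1))%N = n by lia.
  apply: homog_top; first exact (homog_eq e (wedge_homog ht (@ek_homog _ _ 1 L1))).
  by rewrite top1 // pt l00.
apply: (homog_big (k := (2 + (n - 1))%N)); first by lia.
exact: (wedge_homog ho (@ek_homog _ _ 1 L1)).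
Qed.

Lemma f2_homog : homog n f2.
Proof. by move=> S hS; rewrite ffunE (negbTE hS). Qed.

Lemma Lf2 : Lambda_pi n p1 p2 f2.
Proof.
split; first exact: f2_homog.
move=> th om ht ho pt po; split.
  apply: (homog_big (k := (1 + n)%N)); first by lia.
  exact: (wedge_homog ht f2_homog).
apply: (homog_big (k := (2 + n)%N)); first by lia.
exact: (wedge_homog ho f2_homog).
Qed.

Lemma hard th : homog 1 th -> p1 th = 0 -> wedge th f0 = 0.
Proof.
move=> ht pt; apply/ffunP => S; rewrite zeroE.
case: (eqVneq #|S| (n - 1)%N) => hS; last first.
  have e : (1 + (n - 2))%N = (n - 1)%N by lia.
  exact (homog_eq e (wedge_homog ht (@ek_homog _ _ 2 L2)) hS).
have hC := cardsC S; rewrite card_ord in hC.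
have : #|~: S| == 1%N by apply/eqP; lia.
case/cards1P => k hk.
have -> : S = ~: [set k] by rewrite -hk setCK.
have hk1 : homog 1 (@delta R n [set k]) by exact (homog_eq (cards1 k) (@homog_delta R n [set k])).
have w2 : homog 2 (wedge (delta [set k]) th) by exact (homog_eq erefl (wedge_homog hk1 ht)).
have P0 : l (0, p2 (wedge (delta [set k]) th)) = 0 by rewrite hbr // pt hbr0 l00.
suff -> : wedge th f0 (~: [set k]) =
   sg [set k] (~: [set k]) * l (0, p2 (wedge (delta [set k]) th)) by rewrite P0 mulr0.
rewrite (lin_sum (g := fun w => l (0, p2 w)) _ w2); last first.
  by move=> a x y hx hy; rewrite lin2 // l2.
rewrite ffunE mulr_sumr.
rewrite (reindex_onto (fun B => B :\ k) (fun A => k |: A)) /=; last first.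
  move=> A hA; apply: setU1K; apply/negP => kA.
  by have := subsetP hA k kA; rewrite !inE eqxx.
rewrite big_mkcond [RHS]big_mkcond; apply: eq_bigr => B _.
case kB : (k \in B); last first.
  have -> : (k |: B :\ k == B) = false.
    by apply/negbTE/negP => /eqP e; move: kB; rewrite -e !inE eqxx.
  by rewrite andbF wedge_delta sub1set kB mul0r mulr0; case: ifP.
rewrite setD1K // eqxx andbT.
have -> : B :\ k \subset ~: [set k] by apply/subsetP => i; rewrite !inE => /andP [].
have eC : ~: [set k] :\: (B :\ k) = ~: B.
  apply/setP => i; rewrite !inE; case: (eqVneq i k) => [->|] /=; first by rewrite kB.
  by case: (i \in B).
rewrite eC /f0 ffunE setCK wedge_delta sub1set kB.
case: (eqVneq #|B :\ k| 1%N) => hA; last first.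
  by rewrite ht // !mulr0 !mul0r; case: ifP => _; rewrite ?mulr0 ?mul0r.
have hB : #|B| = 2%N by rewrite (cardsD1 k B) kB hA.
have hCB := cardsC B; rewrite card_ord in hCB.
have -> : #|~: B| == (n - 2)%N by apply/eqP; lia.
rewrite hB eqxx.
have := @sign_id R _ k B kB; rewrite /sg => si.
rewrite /L2 /=.
set a := (-1) ^+ wsign (B :\ k) (~: B); set b := (-1) ^+ wsign B (~: B).
set e := (-1) ^+ wsign [set k] (~: [set k]); set d := (-1) ^+ wsign [set k] (B :\ k).
fold a b e d in si.
transitivity ((a * b) * th (B :\ k) * l (0, p2 (delta B))); first ring.
by rewrite si -!mulrA.
Qed.

Lemma Lf0 : Lambda_pi (n - 2) p1 p2 f0.
Proof.
split; first exact: ek_homog.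
move=> th om ht ho pt po; split; first exact: hard.
have e : (2 + (n - 2))%N = n by lia.
apply: homog_top; first exact (homog_eq e (wedge_homog ho (@ek_homog _ _ 2 L2))).
by rewrite top2 // po l00.
Qed.


Lemma cardT_n : #|[set: 'I_n]| = n.
Proof. by rewrite cardsT card_ord. Qed.

Lemma Phi_f p : Phi (f0 + f1 + f2) p = l p + c.
Proof.
have [h1 e1] := hs1 p.1; have [h2 e2] := hs2 p.2.
rewrite /Phi !wedgeAr !addE.
have -> : wedge (s1 p.1) f0 setT = 0.
  have e : (1 + (n - 2))%N = (n - 1)%N by lia.
  apply: (homog_eq e (wedge_homog h1 (@ek_homog _ _ 2 L2))); rewrite cardT_n; lia.
have -> : wedge (s1 p.1) f2 setT = 0.
  by rewrite (homog_big (k := (1 + n)%N) _ (wedge_homog h1 f2_homog)) ?zeroE //; lia.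
have -> : wedge (s2 p.2) f1 setT = 0.
  by rewrite (homog_big (k := (2 + (n - 1))%N) _ (wedge_homog h2 (@ek_homog _ _ 1 L1))) ?zeroE //; lia.
have -> : wedge (s2 p.2) f2 setT = 0.
  by rewrite (homog_big (k := (2 + n)%N) _ (wedge_homog h2 f2_homog)) ?zeroE //; lia.
rewrite top1 // top2 // e1 e2 /f0 /f1 /f2 !ffunE cardT_n eqxx.
have -> : (n == n - 2)%N = false by apply/negbTE; lia.
have -> : (n == n - 1)%N = false by apply/negbTE; lia.
have -> : l p = l (p.1, 0) + l (0, p.2).
  rewrite -[l (p.1, 0)]mul1r -llin; congr l; case: p {h1 e1 h2 e2} => u v.
  by apply/eqP; rewrite xpair_eqE /= !scale1r addr0 add0r !eqxx.
by rewrite !add0r !addr0.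
Qed.
End Surj.
End Main.

Theorem proposition5p10 (R : realType) (V1 V2 : vectType R)
    (br : V1 -> V1 -> V2) (n : nat)
    (p1 : ext R n -> V1) (p2 : ext R n -> V2) :
  step_two_bracket br ->
  (\dim (fullv : {vspace V1}) <= n)%N ->
  surj_carnot_morphism br p1 p2 ->
  exists Phi : ext R n -> (V1 * V2 -> R),
    [/\ (forall (a : R) (x y : ext R n),
           in_sum_Lambda_pi p1 p2 x -> in_sum_Lambda_pi p1 p2 y ->
           forall p, Phi (a *: x + y) p = a * Phi x p + Phi y p),
        (forall x y : ext R n,
           in_sum_Lambda_pi p1 p2 x -> in_sum_Lambda_pi p1 p2 y ->
           Phi x =1 Phi y -> x = y),
        (forall x : ext R n, in_sum_Lambda_pi p1 p2 x -> affine_map (Phi x)) &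
        (forall f : V1 * V2 -> R, affine_map f ->
           exists x : ext R n, in_sum_Lambda_pi p1 p2 x /\ Phi x =1 f)].
Proof.
move=> [bl1 bl2 bsk bfull [z0 hz0]] _ [lin1 lin2 hbr sur1 sur2].
have hbr0 : forall x : V1, br x 0 = 0.
  move=> x; have := bl2 1 0 0 x; rewrite scale1r addr0 scale1r => /eqP.
  by rewrite -subr_eq0 opprD addrA subrr sub0r oppr_eq0 => /eqP.
have hn2 : (2 <= n)%N.
  case: (leqP 2 n) => // hlt; exfalso.
  have [y [hy py]] := sur2 z0.
  have y0 : y = 0 := homog_big hlt hy.
  by move: hz0; rewrite -py y0 (p2_0 lin2) eqxx.
pose s1 v := proj1_sig (constructive_indefinite_description _ (sur1 v)).
have hs1 : forall v, homog 1 (s1 v) /\ p1 (s1 v) = v.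
  by move=> v; exact: (proj2_sig (constructive_indefinite_description _ (sur1 v))).
pose s2 v := proj1_sig (constructive_indefinite_description _ (sur2 v)).
have hs2 : forall v, homog 2 (s2 v) /\ p2 (s2 v) = v.
  by move=> v; exact: (proj2_sig (constructive_indefinite_description _ (sur2 v))).
exists (Phi s1 s2); split.
- by move=> a x y _ _ p; exact: Phi_lin.
- move=> x y hx hy he.
  have hz : in_sum_Lambda_pi p1 p2 ((-1) *: y + x) by apply: insumD.
  have z0' : (-1) *: y + x = 0.
    apply: (Phi_inj0 lin1 lin2 hs1 hs2 hz) => p.
    by rewrite Phi_lin he mulN1r addNr.
  by apply/eqP; rewrite -subr_eq0 addrC -scaleN1r z0'.
- by move=> x hx; apply: (Phi_affine lin1 lin2 hs1 hs2 hx).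
- move=> f [l [llin [c hc]]].
  exists (f0 p2 l + f1 p1 l + f2 n c); split.
    exists (f0 p2 l), (f1 p1 l), (f2 n c); split => //.
    + exact: (Lf0 lin2 hbr hbr0 hn2 llin).
    + by apply: Lf1.
    + exact: Lf2.
  by move=> p; rewrite (Phi_f lin1 lin2 hs1 hs2 hn2 c llin) hc.
Qed.
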